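(* For every task arrival process $\mathcal{T}$, the total measure of times at which the scheduler $\texttt{UNK}$ (described in the context) is saturated is at most $3\,\mathrm{T}_{\texttt{OPT}}$, where $\mathrm{T}_{\texttt{OPT}}$ is the awake time of the optimal offline schedule on $\mathcal{T}$.
   Context: Serial-parallel scheduling problem: $p$ identical processors; a task arrival process is a finite set of tasks $\tau_i=(\sigma_i,\pi_i,t_i)$ with arrival time $t_i\ge 0$, serial work $\sigma_i$, parallel work $\pi_i$, $1\le\pi_i/\sigma_i\le p$. A task runs either as a serial job (work $\sigma_i$, at most one processor at a time) or as a parallel job (work $\pi_i$, any number of processors, rate equal to number of processors); the choice is irrevocable once the task is started; time is continuous and preemption is allowed. A task is alive from arrival until completion; the awake time of a schedule is the measure of the set of times at which some task is alive; $\texttt{OPT}$ is an optimal offline schedule (minimizing awake time). The scheduler $\texttt{UNK}$: whenever there are idle processors, $\texttt{UNK}$ takes any arrived but not-yet-started task $\tau_i$ and, if $\tau_i$ arrived more than $\sigma_i$ time ago, starts its serial job; otherwise it starts its parallel job. At each time $\texttt{UNK}$ allocates one processor to each of the (at most $p$) running serial jobs; at most one parallel job runs at a time, and it receives all processors not used by serial jobs. $\texttt{UNK}$ is saturated at a time if all $p$ processors are in use. *)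

(* Defs.v *)
From HB Require Import structures.
From mathcomp Require Import all_boot all_order all_algebra.
From mathcomp Require Import all_classical all_reals all_analysis.
Set Implicit Arguments. Unset Strict Implicit. Unset Printing Implicit Defensive.
Import Order.TTheory GRing.Theory Num.Theory.
Local Open Scope classical_set_scope.
Local Open Scope ring_scope.

Section SerialParallel.
Variable R : realType.

Record task := Task { sigma : R ; piw : R ; arr : R }.

Definition valid_process (p n : nat) (T : 'I_n -> task) : Prop :=
  (0 < p)%N /\
  forall i, 0 <= arr (T i) /\ 0 < sigma (T i) /\
            1 <= piw (T i) / sigma (T i) <= p%:R.

(* par i = true : task i runs as a parallel job (work pi_i), otherwise serial
   (work sigma_i); the choice is fixed (irrevocable).
   rate i t = number of processors given to task i at time t.
   fin i = completion time of task i. *)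
Record schedule (n : nat) := Schedule {
  par : 'I_n -> bool ;
  rate : 'I_n -> R -> R ;
  fin : 'I_n -> R }.

Definition work (b : bool) (tk : task) : R := if b then piw tk else sigma tk.

Definition feasible (p n : nat) (T : 'I_n -> task) (S : schedule n) : Prop :=
  (forall i : 'I_n,
     measurable_fun setT (rate S i) /\
     (forall t, exists k : nat, rate S i t = k%:R) /\
     (forall t, t < arr (T i) \/ fin S i <= t -> rate S i t = 0) /\
     arr (T i) <= fin S i /\
     (~~ par S i -> forall t, rate S i t <= 1) /\
     (\int[@lebesgue_measure R]_(t in `[arr (T i), fin S i]) (rate S i t)%:E
        = (work (par S i) (T i))%:E)%E) /\
  (forall t, \sum_(i < n) rate S i t <= p%:R).

Definition awake (n : nat) (T : 'I_n -> task) (C : 'I_n -> R) : \bar R :=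
  (@lebesgue_measure R) (\bigcup_(i in [set: 'I_n]) `[arr (T i), C i[%classic).

Definition OPT_awake (p n : nat) (T : 'I_n -> task) : \bar R :=
  ereal_inf [set awake T (fin S) | S in [set S : schedule n | feasible p T S]].

(* An execution of UNK is described by start times s and completion times C. *)
Definition unk_serial (n : nat) (T : 'I_n -> task) (s : 'I_n -> R) (i : 'I_n)
  : bool := arr (T i) + sigma (T i) < s i.

Definition running (n : nat) (s C : 'I_n -> R) (i : 'I_n) (t : R) : bool :=
  (s i <= t) && (t < C i).

Definition nser (n : nat) (T : 'I_n -> task) (s C : 'I_n -> R) (t : R) : nat :=
  #|[set j : 'I_n | unk_serial T s j && running s C j t]|.

(* processors allocated by UNK to task i at time t: one per running serial job,
   all remaining processors to the (unique) running parallel job. *)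
Definition unk_rate (p n : nat) (T : 'I_n -> task) (s C : 'I_n -> R)
  (i : 'I_n) (t : R) : R :=
  if running s C i t then
    (if unk_serial T s i then 1 else p%:R - (nser T s C t)%:R)
  else 0.

Definition unk_saturated (p n : nat) (T : 'I_n -> task) (s C : 'I_n -> R)
  (t : R) : Prop := \sum_(i < n) unk_rate p T s C i t = p%:R.

Definition unk_run (p n : nat) (T : 'I_n -> task) (s C : 'I_n -> R) : Prop :=
  (forall i, arr (T i) <= s i /\ s i <= C i /\
     (\int[@lebesgue_measure R]_(t in `[s i, C i]) (unk_rate p T s C i t)%:E
        = (work (~~ unk_serial T s i) (T i))%:E)%E) /\
  (* serial jobs only start when a processor is idle *)
  (forall t, (nser T s C t <= p)%N) /\
  (* a parallel job starts only when a processor is idle, and while it runs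
     no processor is idle, so no job starts strictly inside its run *)
  (forall i, ~~ unk_serial T s i ->
     (nser T s C (s i) < p)%N /\
     forall j, j != i -> ~ (s i < s j < C i)) /\
  (forall i j, i != j -> ~~ unk_serial T s i -> ~~ unk_serial T s j ->
     C i <= s j \/ C j <= s i) /\
  (* greedy: whenever a task is waiting, there are no idle processors *)
  (forall i t, arr (T i) <= t < s i -> unk_saturated p T s C t).

End SerialParallel.

(* Main.v *)
Require Import Defs.
From HB Require Import structures.
From mathcomp Require Import all_boot all_order all_algebra.
From mathcomp Require Import all_classical all_reals all_analysis.
From mathcomp Require Import lra measurable_realfun.
Import Order.TTheory GRing.Theory Num.Theory.
Local Open Scope classical_set_scope.
Local Open Scope ring_scope.
Section S. Variable R : realType.
Notation mu := (@lebesgue_measure R).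

Lemma muco (x y : R) : mu `[x, y[%classic = (if (x < y)%R then (y - x)%:E else 0%E).
Proof. by rewrite lebesgue_measure_itv /= lte_fin; case: ifP. Qed.

Definition UK (l : seq (R*R)) : set R := \big[setU/set0]_(x <- l) `[x.1, x.2[%classic.
Definition UD (l : seq (R*R)) : set R := \big[setU/set0]_(x <- l) `[x.1, 2 * x.2 - x.1[%classic.
Definition ov (x y : R*R) := [&& x.1 < y.2, y.1 < x.2, x.1 < x.2 & y.1 < y.2].

Lemma mUK l : measurable (UK l).
Proof. by apply: bigsetU_measurable => *; exact: measurable_itv. Qed.
Lemma mUD l : measurable (UD l).
Proof. by apply: bigsetU_measurable => *; exact: measurable_itv. Qed.

Lemma inco (x y t : R) : `[x, y[%classic t <-> (x <= t /\ t < y).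
Proof. by rewrite /= in_itv /=; split => [/andP[]|[-> ->]]. Qed.

Lemma doubling l : (mu (UD l) <= 2%:E * mu (UK l))%E.
Proof.
move: {2}(size l) (leqnn (size l)) => m; elim: m l => [|m IH] [|x l] //=.
- by rewrite /UD /UK !big_nil measure0 mule0.
- by rewrite /UD /UK !big_nil measure0 mule0.
rewrite ltnS => Hs.
have [/hasP [y yl oxy]| nov] := boolP (has (ov x) l).
  pose h := (if x.1 <= y.1 then x.1 else y.1, if x.2 <= y.2 then y.2 else x.2).
  have Hs' : (size (h :: rem y l) <= m)%N by rewrite /= size_rem // prednK //; case: (l) yl.
  have eK : UK (x :: l) = UK (h :: rem y l).
    rewrite /UK big_cons (perm_big _ (perm_to_rem yl)) /= !big_cons setUA.
    congr (_ `|` _); apply/seteqP; split => t /=.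
      move: oxy; rewrite /ov /h; case/and4P => o1 o2 o3 o4.
      case=> /inco [h1 h2]; apply/inco; split;
      repeat case: ifPn => /=; rewrite -?ltNge => ? ; lra.
    move: oxy; rewrite /ov /h; case/and4P => o1 o2 o3 o4.
    move/inco => [h1 h2].
    have [k|k] := leP x.1 t.
      have [k2|k2] := ltP t x.2; first by left; apply/inco.
      right; apply/inco; move: h1 h2; repeat case: ifPn => /=; rewrite -?ltNge => *; lra.
    right; apply/inco; move: h1 h2; repeat case: ifPn => /=; rewrite -?ltNge => *; lra.
  have sD : UD (x :: l) `<=` UD (h :: rem y l).
    rewrite /UD big_cons (perm_big _ (perm_to_rem yl)) /= !big_cons setUA.
    apply: setSU => t; move: oxy; rewrite /ov /h; case/and4P => o1 o2 o3 o4.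
    case=> /inco [h1 h2]; apply/inco; split;
      repeat case: ifPn => /=; rewrite -?ltNge => ? ; lra.
  rewrite eK; apply: le_trans (IH _ Hs').
  by apply: le_measure => //; rewrite inE; exact: mUD.
have Hl : (size l <= m)%N by [].
have dis : `[x.1, x.2[%classic `&` UK l = set0.
  apply/seteqP; split => t //= [/inco [h1 h2]].
  rewrite /UK -bigcup_seq => -[y /= yl /inco [h3 h4]].
  move/hasPn: nov => /(_ y yl); rewrite /ov.
  by rewrite (le_lt_trans h1 h4) (le_lt_trans h3 h2) (le_lt_trans h1 h2) (le_lt_trans h3 h4).
have eK : mu (UK (x :: l)) = (mu `[x.1, x.2[%classic + mu (UK l))%E.
  rewrite /UK big_cons measureU //; by [exact: measurable_itv | exact: mUK | exact: dis].
have sD : (mu (UD (x :: l)) <= mu `[x.1, (2 * x.2 - x.1)%R[%classic + mu (UD l))%E.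
  rewrite /UD big_cons measureU2 //; by [exact: measurable_itv | exact: mUD].
rewrite eK ge0_muleDr //; apply: le_trans sD _; apply: leeD; last exact: IH.
rewrite !muco; case: ifPn => c1; case: ifPn => c2.
- by rewrite -EFinM lee_fin; lra.
- by exfalso; move: c2; rewrite -leNgt; lra.
- by exfalso; move: c1; rewrite -leNgt; lra.
- by rewrite mule0.
Qed.

Lemma indic_co (x y t : R) : \1_(`[x, y[%classic) t = ((x <= t) && (t < y))%:R :> R.
Proof. by rewrite indicE mem_setE in_itv. Qed.


Lemma int_le_len (g : R -> R) (x y c : R) : x <= y -> 0 <= c ->
  measurable_fun setT g -> (forall t, 0 <= g t <= c) ->
  (\int[mu]_(t in `[x, y]) (g t)%:E <= (c * (y - x))%:E)%E.
Proof.
move=> xy c0 mg gb.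
apply: (@le_trans _ _ (\int[mu]_(t in `[x, y]) (cst c%:E) t)%E).
  apply: (@ge0_le_integral _ _ _ mu _ (measurable_itv _)).
  - by move=> t _; rewrite lee_fin; case/andP: (gb t).
  - apply/measurable_EFinP; apply: measurable_funS mg => //; exact: measurable_itv.
  - exact: measurable_cst.
  - by move=> t _; rewrite lee_fin; case/andP: (gb t).
rewrite integral_cst; last exact: measurable_itv.
rewrite -[X in (_ * X <= _)%E]/(mu `[x, y]%classic) lebesgue_measure_itv /= lte_fin.
case: ifPn => [_|]; first by rewrite -EFinM.
rewrite -leNgt => yx; have -> : y = x by apply/eqP; rewrite eq_le yx xy.
by rewrite subrr mulr0 mule0.
Qed.

Lemma sub_bigU (I : Type) (r : seq I) (P : pred I) (F G : I -> set R) :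
  (forall i, P i -> F i `<=` G i) ->
  \big[setU/set0]_(i <- r | P i) F i `<=` \big[setU/set0]_(i <- r | P i) G i.
Proof.
move=> FG; elim/big_ind2 : _ => //; first by move=> *; exact: setUSS.
Qed.

Section Main.
Variables (p n : nat) (T : 'I_n -> task R) (s C : 'I_n -> R).
Hypothesis hV : valid_process p T.
Hypothesis hU : unk_run p T s C.

Let u i t := unk_rate p T s C i t.

Lemma nserE t : (nser T s C t)%:R = \sum_(j < n) ((unk_serial T s j) && (running s C j t))%:R :> R.
Proof.
rewrite /nser -sum1_card natr_sum big_mkcond /=; apply: eq_bigr => j _.
case: ifPn => [/set_mem /= -> //|H]; case E: (_ && _) => //; case/negP: H; exact: mem_set.
Qed.

Lemma u_ge0 i t : 0 <= u i t.
Proof.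
rewrite /u /unk_rate; case: ifP => // _; case: ifP => // _.
by rewrite subr_ge0 ler_nat; exact: (hU.2.1 t).
Qed.

Lemma p_gt0 : (0 < p)%N. Proof. by case: hV. Qed.

Lemma u_lep i t : u i t <= p%:R.
Proof.
rewrite /u /unk_rate; case: ifP => // _; case: ifP => // _.
  by rewrite ler1n p_gt0.
by rewrite lerBlDr lerDl.
Qed.

Lemma u_zero i t : ~~ running s C i t -> u i t = 0.
Proof. by rewrite /u /unk_rate => /negbTE ->. Qed.

Lemma u_meas i : measurable_fun setT (u i).
Proof.
have -> : u i = fun t => \1_(`[s i, C i[%classic) t *
   (if unk_serial T s i then 1 else p%:R - \sum_(j < n) (unk_serial T s j)%:R * \1_(`[s j, C j[%classic) t).
  apply/funext => t; rewrite /u /unk_rate indic_co /running nserE.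
  case: (_ && _); rewrite ?mul0r ?mul1r //.
  case: ifP => // _; congr (_ - _); apply: eq_bigr => j _.
  by rewrite indic_co /running; case: (unk_serial _ _ _); rewrite ?mul0r ?mul1r.
apply: measurable_realfun.measurable_funM; first exact: measurable_realfun.measurable_indic (measurable_itv _).
case: (unk_serial T s i); first exact: measurable_cst.
apply: measurable_realfun.measurable_funB; first exact: measurable_cst.
apply: measurable_sum => j; apply: measurable_realfun.measurable_funM; first exact: measurable_cst.
exact: measurable_realfun.measurable_indic (measurable_itv _).
Qed.

Lemma u_int i : (\int[mu]_t (u i t)%:E = (work (~~ unk_serial T s i) (T i))%:E)%E.
Proof.
have := (hU.1 i).2.2; rewrite integral_mkcond => <-.
apply: eq_integral => t _; rewrite patchE; case: ifPn => // H.
rewrite u_zero //; apply: contra H; rewrite /running mem_setE in_itv /= => /andP[-> /ltW ->].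
by [].
Qed.

Definition Sat := [set t : R | unk_saturated p T s C t].

Lemma mSat : measurable Sat.
Proof.
have mf : measurable_fun setT (fun t => \sum_(i < n) u i t).
  by apply: measurable_sum => i; exact: u_meas.
have := mf measurableT _ (measurable_set1 p%:R); rewrite setTI.
by congr measurable; apply/seteqP; split => t.
Qed.

Lemma E1 : ((p%:R)%:E * mu Sat <= \sum_(i < n) (work (~~ unk_serial T s i) (T i))%:E)%E.
Proof.
rewrite -(setIT Sat) -integral_indic //; last exact: mSat.
have mI : measurable_fun [set: R] (EFin \o (\1_Sat : R -> R)).
  by apply/measurable_realfun.measurable_EFinP; exact: measurable_realfun.measurable_indic mSat.
have I0 : forall t, setT t -> (0 <= (\1_Sat t : R)%:E)%E.
  by move=> t _; rewrite lee_fin indicE; case: (_ \in _).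
rewrite -ge0_integralZl_EFin //.
have -> : (\sum_(i < n) (work (~~ unk_serial T s i) (T i))%:E =
          \sum_(i < n) \int[mu]_t (u i t)%:E)%E.
  by apply: eq_bigr => i _; rewrite u_int.
rewrite -ge0_integral_sum //; last 2 first.
- by move=> i; apply/measurable_realfun.measurable_EFinP; exact: u_meas.
- by move=> i t _; rewrite lee_fin u_ge0.
apply: ge0_le_integral => //.
- apply/measurable_realfun.measurable_EFinP; apply: measurable_realfun.measurable_funM; first exact: measurable_cst.
  exact: measurable_realfun.measurable_indic mSat.
- by apply: emeasurable_sum => i; apply/measurable_realfun.measurable_EFinP; exact: u_meas.
move=> t _; rewrite -EFinM sumEFin lee_fin indicE.
case: (boolP (t \in Sat)) => [/set_mem H|_].
  by rewrite mulr1 /u; move: H; rewrite /Sat /= /unk_saturated => ->.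
by rewrite mulr0 sumr_ge0 // => i _; exact: u_ge0.
Qed.


Variables (S : schedule R n).
Hypothesis hF : feasible p T S.

Lemma r_ge0 i t : 0 <= rate S i t.
Proof. by have [k ->] := (hF.1 i).2.1 t. Qed.

Lemma r_int i : (\int[mu]_t (rate S i t)%:E = (work (par S i) (T i))%:E)%E.
Proof.
have := (hF.1 i).2.2.2.2.2; rewrite integral_mkcond => <-.
apply: eq_integral => t _; rewrite patchE; case: ifPn => // H.
rewrite (hF.1 i).2.2.1 //; move: H; rewrite mem_setE in_itv /= negb_and -!ltNge.
by case/orP => [->|/ltW ->]; [left|right].
Qed.

Definition Aset := \bigcup_(i in [set: 'I_n]) `[arr (T i), fin S i[%classic.

Lemma mA : measurable Aset.
Proof. by apply: fin_bigcup_measurable; [exact: finite_finset | move=> i _; exact: measurable_itv]. Qed.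

Lemma E2 : (\sum_(i < n) (work (par S i) (T i))%:E <= (p%:R)%:E * mu Aset)%E.
Proof.
rewrite -(setIT Aset) -integral_indic //; last exact: mA.
have mI : measurable_fun [set: R] (EFin \o (\1_Aset : R -> R)).
  by apply/measurable_EFinP; exact: measurable_indic mA.
have I0 : forall t, setT t -> (0 <= (\1_Aset t : R)%:E)%E.
  by move=> t _; rewrite lee_fin indicE; case: (_ \in _).
rewrite -ge0_integralZl_EFin //.
have -> : (\sum_(i < n) (work (par S i) (T i))%:E =
          \sum_(i < n) \int[mu]_t (rate S i t)%:E)%E.
  by apply: eq_bigr => i _; rewrite r_int.
rewrite -ge0_integral_sum //; last 2 first.
- by move=> i; apply/measurable_EFinP; exact: (hF.1 i).1.
- by move=> i t _; rewrite lee_fin r_ge0.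
apply: ge0_le_integral => //.
- by move=> t _; apply: sume_ge0 => i _; rewrite lee_fin r_ge0.
- by apply: emeasurable_sum => i; apply/measurable_EFinP; exact: (hF.1 i).1.
- apply/measurable_EFinP; apply: measurable_funM; first exact: measurable_cst.
  exact: measurable_indic mA.
move=> t _; rewrite -EFinM sumEFin lee_fin indicE.
case: (boolP (t \in Aset)) => [_|H].
  by rewrite mulr1; exact: hF.2.
rewrite mulr0 big1 // => i _; apply: (hF.1 i).2.2.1.
have [h1|h1] := ltP t (arr (T i)); first by left.
have [h2|h2] := leP (fin S i) t; first by right.
by case/negP: H; apply: mem_set; exists i => //; rewrite /= in_itv /= h1 h2.
Qed.

Definition B i := ~~ unk_serial T s i && ~~ par S i.
Let e i := piw (T i) / p%:R.

Lemma pR_gt0 : 0 < p%:R :> R.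
Proof. by rewrite ltr0n p_gt0. Qed.

Lemma B_facts i : B i ->
  [/\ arr (T i) + sigma (T i) <= fin S i, arr (T i) <= s i, s i <= arr (T i) + sigma (T i),
      e i <= sigma (T i) & e i <= C i - s i].
Proof.
case/andP => us ps.
have [p0 hv] := hV; have [a0 [sg0 /andP[r1 r2]]] := hv i.
split.
- have hi := (hF.1 i).2.2.2.2.2; rewrite /work (negbTE ps) in hi.
  have af := (hF.1 i).2.2.2.1.
  have := @int_le_len (rate S i) _ _ 1 af ler01 ((hF.1 i).1).
  rewrite hi lee_fin mul1r.
  have H : forall t, 0 <= rate S i t <= 1.
    by move=> t; rewrite r_ge0 /=; exact: (hF.1 i).2.2.2.2.1 ps t.
  move=> /(_ H); lra.
- exact: (hU.1 i).1.
- by move: us; rewrite /unk_serial -leNgt.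
- by rewrite /e ler_pdivrMr ?pR_gt0 // mulrC -ler_pdivrMr.
- have hi := (hU.1 i).2.2; rewrite /work us in hi.
  have := @int_le_len (u i) _ _ p%:R (hU.1 i).2.1 (ltW pR_gt0) (u_meas i).
  rewrite hi lee_fin => /(_ (fun t => introT andP (conj (u_ge0 i t) (u_lep i t)))).
  by rewrite /e ler_pdivrMr ?pR_gt0 // mulrC.
Qed.

Lemma e_gt0 i : 0 < e i.
Proof.
have [p0 hv] := hV; have [a0 [sg0 /andP[r1 r2]]] := hv i.
rewrite /e divr_gt0 ?pR_gt0 //.
by rewrite ler_pdivlMr // mul1r in r1; exact: lt_le_trans r1.
Qed.

Lemma E3 : (\sum_(i < n | B i) (e i)%:E <= 2%:E * mu Aset)%E.
Proof.
pose J i := `[s i, s i + e i[%classic.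
have eJ : (\sum_(i < n | B i) (e i)%:E = mu (\big[setU/set0]_(i < n | B i) J i))%E.
  rewrite measure_bigsetU_ord_cond.
  - apply: eq_bigr => i _; rewrite -[X in _ = X]/(mu (J i)) /J muco ltrDl e_gt0.
    by rewrite addrAC subrr add0r.
  - by move=> i _; exact: measurable_itv.
  move=> i j Bi Bj [t [/= Ji Jj]].
  apply/eqP; apply/negPn/negP => ij.
  move: Ji Jj => /inco [t1 t2] /inco [t3 t4].
  have [_ _ _ _ ei] := B_facts _ Bi; have [_ _ _ _ ej] := B_facts _ Bj.
  case/andP: Bi => Bi _; case/andP: Bj => Bj _.
  by case: (hU.2.2.2.1 i j ij Bi Bj) => H; lra.
pose l := [seq (arr (T i), arr (T i) + sigma (T i)) | i <- index_enum 'I_n & B i].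
rewrite eJ; apply: (@le_trans _ _ (mu (UD l))).
  apply: le_measure; rewrite ?inE.
  - by apply: bigsetU_measurable => i _; exact: measurable_itv.
  - exact: mUD.
  rewrite /UD big_map big_filter; apply: sub_bigU => i Bi t.
  have [_ h1 h2 h3 _] := B_facts _ Bi.
  rewrite /J /= !in_itv /= => /andP[t1 t2]; apply/andP; split; lra.
apply: le_trans (doubling l) _; apply: lee_wpmul2l => //.
apply: le_measure; rewrite ?inE; [exact: mUK | exact: mA |].
rewrite /UK big_map big_filter -bigcup_seq_cond => t [i /= /andP[_ Bi]].
have [h1 _ _ _ _] := B_facts _ Bi.
rewrite in_itv /= => /andP[t1 t2]; exists i => //=; rewrite in_itv /= t1 /=; lra.
Qed.

Lemma key : (mu Sat <= 3%:E * mu Aset)%E.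
Proof.
have h1 := E1; have h2 := E2; have h3 := E3.
have pp := pR_gt0.
have hW : \sum_(i < n) work (~~ unk_serial T s i) (T i) <=
          \sum_(i < n) work (par S i) (T i) + p%:R * \sum_(i < n | B i) e i.
  rewrite mulr_sumr [X in _ <= _ + X]big_mkcond /= -big_split /=; apply: ler_sum => i _.
  have [p0 hv] := hV; have [a0 [sg0 /andP[r1 r2]]] := hv i.
  have sp : sigma (T i) <= piw (T i) by rewrite ler_pdivlMr // mul1r in r1.
  have pe : p%:R * e i = piw (T i) by rewrite /e mulrC -mulrA mulVf ?mulr1 // gt_eqF.
  rewrite /B /work; case: (unk_serial T s i); case: (par S i) => /=; rewrite ?addr0 //; lra.
have h4 : ((p%:R)%:E * mu Sat <= (p%:R)%:E * (3%:E * mu Aset))%E.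
  apply: (le_trans h1); rewrite sumEFin; apply: (le_trans (y := (\sum_(i < n) work (par S i) (T i))%:E + (p%:R)%:E * (\sum_(i < n | B i) e i)%:E)%E).
    by rewrite -EFinM -EFinD lee_fin.
  rewrite -sumEFin.
  have -> : (3%:E * mu Aset = mu Aset + 2%:E * mu Aset)%E.
    have -> : (3 : R) = 1 + 2 by lra.
    by rewrite EFinD ge0_muleDl // mul1e.
  rewrite ge0_muleDr //; last by apply: mule_ge0.
  apply: leeD => //; apply: lee_wpmul2l; first by rewrite lee_fin ltW.
  by rewrite sumEFin in h3.
by rewrite lee_pmul2l ?lte_fin // in h4.
Qed.

End Main.
End S.

Theorem lemma5p3 (R : realType) (p n : nat) (T : 'I_n -> task R)
  (s C : 'I_n -> R) :
  valid_process p T -> unk_run p T s C ->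
  ((@lebesgue_measure R) [set t : R | unk_saturated p T s C t]
     <= 3%:E * OPT_awake p T)%E.
Proof.
move=> hV hU.
have H : ((3^-1 : R)%:E * (@lebesgue_measure R) [set t : R | unk_saturated p T s C t] <= OPT_awake p T)%E.
  apply: le_ereal_inf_tmp => _ [S hF <-].
  have k := @key R p n T s C hV hU S hF.
  have h3 : (0 <= (3^-1 : R)%:E)%E by rewrite lee_fin invr_ge0.
  have k3 := lee_wpmul2l h3 k.
  rewrite /awake; apply: le_trans k3 _.
  by rewrite muleA -EFinM mulVf ?mul1e.
have h3 : (0 <= (3 : R)%:E)%E by [].
apply: le_trans (lee_wpmul2l h3 H).
by rewrite muleA -EFinM mulfV ?mul1e.
Qed.
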